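(* Let $p$ be a prime and $q=1/p$. For integers $n\ge1$, $\mu\ge1$, let $P(n,p^\mu)$ be the probability that a random symmetric $n\times n$ matrix over $\mathbf{Z}_{p^\mu}$ has determinant $\not\equiv 0\pmod{p^\mu}$, and extend this by the boundary conditions $P(0,p^\mu)=1$ for $\mu>0$ and $P(n,p^\mu)=0$ for $\mu\le 0$ (all $n\ge 0$). Then for all $n>0$ and $\mu>0$, $$P(n,p^\mu)=(1-q)P(n-1,p^\mu)+q(1-q^{n-1})P(n-2,p^\mu)+q^n(1-q)P(n-1,p^{\mu-1})+q^{n+1}P(n,p^{\mu-2}),$$ where for $n=1$ the second term (whose coefficient $q(1-q^{0})$ vanishes) is taken to be $0$.
   Context: For a positive integer $m$, $\mathbf{Z}_m=\{1,2,\ldots,m\}$ (viewed as residues mod $m$). A random symmetric $n\times n$ matrix over $\mathbf{Z}_m$ is one whose entries $a_{ij}$, $i\le j$, are chosen independently and uniformly from $\mathbf{Z}_m$, with $a_{ji}=a_{ij}$. *)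

(* Defs.v *)
From HB Require Import structures.
From mathcomp Require Import all_boot all_order all_algebra.
Set Implicit Arguments. Unset Strict Implicit. Unset Printing Implicit Defensive.
Import Order.TTheory GRing.Theory Num.Theory.
Local Open Scope ring_scope.

(* Uniform choice of the entries
   a_ij (i <= j) is the same as the uniform distribution on the finite set
   of symmetric matrices, so the probability is a ratio of cardinalities. *)
Definition symP (m n : nat) : rat :=
  (#|[set A : 'M['Z_m]_n | (A^T == A) && (\det A != 0)]|)%:R /
  (#|[set A : 'M['Z_m]_n | A^T == A]|)%:R.

(* P(n, p^mu) with the boundary convention P(n, p^mu) = 0 for mu <= 0.
   (P(0, p^mu) = 1 for mu > 0 holds automatically: det of 0x0 matrix is 1.) *)
Definition Pdet (p n : nat) (mu : int) : rat :=
  match mu with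
  | Posz k => if k is 0%N then 0 else symP (p ^ k) n
  | Negz _ => 0
  end.

(* Main.v *)
Require Import Defs.
From HB Require Import structures.
From mathcomp Require Import all_boot all_order all_algebra.
From mathcomp Require Import fingroup perm.
From mathcomp.algebra_tactics Require Import ring.
From mathcomp Require Import zify.
Set Implicit Arguments. Unset Strict Implicit. Unset Printing Implicit Defensive.
Import Order.TTheory GRing.Theory Num.Theory.
Local Open Scope ring_scope.

Lemma det_schur (R : comUnitRingType) k l (X : 'M[R]_k) (Y : 'M[R]_(k,l))
  (W : 'M[R]_(l,k)) (Z : 'M[R]_l) : X \in unitmx ->
  \det (block_mx X Y W Z) = \det X * \det (Z - W *m invmx X *m Y).
Proof.
move=> uX.
have -> : block_mx X Y W Z = block_mx 1%:M 0 (W *m invmx X) 1%:M *m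
   block_mx X Y 0 (Z - W *m invmx X *m Y).
  rewrite mulmx_block !mul1mx !mul0mx !addr0 -mulmxA mulVmx // mulmx1.
  by rewrite addrC subrK.
by rewrite det_mulmx det_lblock det_ublock !det1 !mul1r.
Qed.

Lemma det2 (R : comRingType) (A : 'M[R]_2) :
  \det A = A 0 0 * A 1 1 - A 0 1 * A 1 0.
Proof.
rewrite (expand_det_row _ 0) !big_ord_recl big_ord0 addr0 /cofactor !det_mx11 !mxE /=.
have L : forall (i : 'I_2) (j : 'I_1), lift i j = (if val i == 0%N then 1 else 0).
  by move=> [[|[|]] //= ?] j; apply/val_inj; rewrite /= ?(ord1 j).
rewrite !L /= expr0 expr1 mul1r mulN1r mulrN; congr (_ * _ - _ * _).
Qed.

Lemma blk11 (R : comRingType) (a b c d : R) :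
  let X : 'M[R]_(1+1) := block_mx a%:M b%:M c%:M d%:M in
  [/\ X 0 0 = a, X 0 1 = b, X 1 0 = c & X 1 1 = d].
Proof.
have E0 : (0 : 'I_(1+1)) = lshift 1 0 by apply/val_inj.
have E1 : (1 : 'I_(1+1)) = rshift 1 0 by apply/val_inj.
rewrite /= E0 E1 block_mxEul block_mxEur block_mxEdl block_mxEdr !mxE /=.
by rewrite !mulr1n.
Qed.
Lemma sym_block (T : Type) k l (X : 'M[T]_k) (Y : 'M[T]_(k,l)) (Z : 'M[T]_l) :
  ((block_mx X Y Y^T Z)^T = block_mx X Y Y^T Z) <-> (X^T = X /\ Z^T = Z).
Proof.
rewrite tr_block_mx trmxK; split.
  by case/eq_block_mx => -> _ _ ->.
by case=> -> ->.
Qed.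

Lemma sum_sym_block (T : finType) (V : nmodType) k l (F : 'M[T]_(k + l) -> V) :
 \sum_(A : 'M[T]_(k + l) | A^T == A) F A =
 \sum_(X : 'M[T]_k | X^T == X) \sum_(Y : 'M[T]_(k,l))
   \sum_(Z : 'M[T]_l | Z^T == Z) F (block_mx X Y Y^T Z).
Proof.
pose h (t : 'M[T]_k * ('M[T]_(k,l) * 'M[T]_l)) := block_mx t.1 t.2.1 t.2.1^T t.2.2.
rewrite (reindex h) /=; last first.
  exists (fun A => (ulsubmx A, (ursubmx A, drsubmx A))) => [t _|A].
    by case: t => X [Y Z]; rewrite /h /= block_mxKul block_mxKur block_mxKdr.
  rewrite inE => /eqP sA; rewrite /h /=.
  rewrite -[RHS]submxK; congr block_mx.
  by rewrite trmx_ursub sA.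
symmetry; under eq_bigr do rewrite pair_big.
rewrite pair_big /=.
symmetry.
apply: eq_bigl => -[X [Y Z]] /=.
apply/eqP/andP => [/sym_block [-> ->]|[/eqP ? /eqP ?]] //.
by apply/sym_block.
Qed.

Lemma sum_M1 (R : finComUnitRingType) (V : nmodType) (G : 'M[R]_1 -> V) :
  \sum_(X : 'M[R]_1 | X^T == X) G X = \sum_(a : R) G a%:M.
Proof.
rewrite (eq_bigl xpredT); last by move=> X; rewrite [X]mx11_scalar tr_scalar_mx eqxx.
rewrite (reindex (fun a : R => a%:M)) //.
by exists (fun X : 'M[R]_1 => X 0 0) => [a _|X _]; rewrite ?mxE ?eqxx ?mulr1n // -mx11_scalar.
Qed.

Lemma sum_congr_sym (R : finComUnitRingType) (V : nmodType) n (P : 'M[R]_n)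
  (F : 'M[R]_n -> V) : P \in unitmx ->
  \sum_(D : 'M[R]_n | D^T == D) F (P^T *m D *m P) = \sum_(D : 'M[R]_n | D^T == D) F D.
Proof.
move=> uP.
have uPt : P^T \in unitmx by rewrite unitmx_tr.
rewrite [RHS](reindex (fun D => P^T *m D *m P)) /=; last first.
  exists (fun D => (invmx P)^T *m D *m invmx P) => D _.
    by rewrite trmx_inv !mulmxA mulVmx // mul1mx -mulmxA mulmxV // mulmx1.
  by rewrite trmx_inv !mulmxA mulmxV // mul1mx -mulmxA mulVmx // mulmx1.
apply: eq_bigl => D; rewrite !trmx_mul trmxK mulmxA.
apply/eqP/eqP => [->|E] //.
have := congr1 (fun M => invmx P^T *m M *m invmx P) E.
by rewrite !mulmxA !mulVmx // !mul1mx -!mulmxA !mulmxV // !mulmx1.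
Qed.

Lemma sum_transl_sym (R : finComUnitRingType) (V : nmodType) n (C : 'M[R]_n)
  (F : 'M[R]_n -> V) : C^T = C ->
  \sum_(D : 'M[R]_n | D^T == D) F (D + C) = \sum_(D : 'M[R]_n | D^T == D) F D.
Proof.
move=> sC.
rewrite [RHS](reindex (fun D => D + C)) /=; last first.
  by exists (fun D => D - C) => D _; rewrite ?addrK ?subrK.
apply: eq_bigl => D; rewrite linearD /= sC.
by apply/eqP/eqP => [->|/addIr].
Qed.

Lemma sum_fiber (X Y : finType) (V : nmodType) (phi : X -> Y) (P : pred Y) (k : nat)
  (f : Y -> V) : (forall x, P (phi x)) ->
  (forall y, P y -> #|[set x | phi x == y]| = k) ->
  \sum_x f (phi x) = (\sum_(y | P y) f y) *+ k.
Proof.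
move=> Pphi Hk.
rewrite (partition_big phi P) //= -sumrMnl; apply: eq_bigr => y Py.
rewrite -(Hk y Py) -sumr_const; apply: eq_big => x; first by rewrite inE.
by move=> /eqP ->.
Qed.

Lemma card_fiber (V W : finZmodType) (phi : V -> W) :
  (forall x y, phi (x + y) = phi x + phi y) ->
  forall x0, #|[set x | phi x == phi x0]| = #|[set x | phi x == 0]|.
Proof.
move=> Hphi x0.
have HB : forall x y, phi (x - y) = phi x - phi y.
  by move=> x y; apply: (addIr (phi y)); rewrite -Hphi !subrK.
have -> : [set x | phi x == 0] = (fun x => x - x0) @: [set x | phi x == phi x0].
  apply/setP => x; rewrite inE; apply/eqP/imsetP => [E|[y]].
    exists (x + x0); last by rewrite addrK.
    by rewrite inE Hphi E add0r.
  by rewrite inE => /eqP Hy ->; rewrite HB Hy subrr.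
by rewrite card_imset //; apply: addIr.
Qed.
Lemma sum_cst (T : finType) (V : nmodType) (x : V) : \sum_(i : T) x = x *+ #|T|.
Proof. by rewrite -sumr_const; apply: eq_bigl => i; rewrite inE. Qed.

Lemma sum_cst_pred (T : finType) (V : nmodType) (P : pred T) (x : V) :
  \sum_(i | P i) x = x *+ #|[set i | P i]|.
Proof. by rewrite -sumr_const; apply: eq_bigl => i; rewrite inE. Qed.

Lemma det_cast (T : comNzRingType) n1 n2 (e : n1 = n2) (A : 'M[T]_n1) :
  \det (castmx (e, e) A) = \det A.
Proof. by case: n2 / e; rewrite castmx_id. Qed.

Section ZP.
Variables (p mu : nat).
Hypotheses (pp : prime p) (mu0 : (0 < mu)%N).
Local Notation m := (p ^ mu)%N.
Local Notation R := 'Z_(p ^ mu).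

Lemma m_gt1 : (1 < m)%N.
Proof. by rewrite -(expn0 p) ltn_exp2l ?prime_gt1. Qed.

Lemma card_R : #|R| = m.
Proof. by rewrite card_ord Zp_cast // m_gt1. Qed.

Lemma modZ a : (a %% (Zp_trunc m).+2 = a %% m)%N.
Proof. by rewrite Zp_cast // m_gt1. Qed.

Lemma valD (x y : R) : val (x + y) = ((val x + val y) %% m)%N.
Proof. by rewrite /= modZ. Qed.

Lemma valM (x y : R) : val (x * y) = ((val x * val y) %% m)%N.
Proof. by rewrite /= modZ. Qed.

Lemma val_natr k : val (k%:R : R) = (k %% m)%N.
Proof. exact: val_Zp_nat m_gt1 k. Qed.

Lemma val1 : val (1 : R) = 1%N.
Proof. by rewrite -[1]/(1%:R) val_natr modn_small // m_gt1. Qed.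

Lemma val_lt (x : R) : (val x < m)%N.
Proof. by rewrite -[X in (_ < X)%N]card_R card_ord ltn_ord. Qed.

Lemma eq0_val (x : R) : (x == 0) = (m %| val x)%N.
Proof.
rewrite /dvdn modn_small ?val_lt //; apply/eqP/eqP => [->|h] //.
Qed.

Definition good k (x : R) : bool := ~~ (p ^ k %| val x)%N.
Definition nu (x : R) : bool := (p %| val x)%N.

Lemma dvd_modm d n : (d %| m)%N -> (d %| n %% m)%N = (d %| n)%N.
Proof. by move=> dm; rewrite /dvdn (modn_dvdm _ dm). Qed.

Lemma good0 x : good 0 x = false.
Proof. by rewrite /good expn0 dvd1n. Qed.

Lemma good_1 k : (0 < k)%N -> good k 1.
Proof.
move=> k0; rewrite /good val1 dvdn1 -(expn0 p) eqn_exp2l ?prime_gt1 //.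
by rewrite -lt0n.
Qed.

Lemma nuE x : nu x = ~~ good 1 x.
Proof. by rewrite /good /nu expn1 negbK. Qed.

Lemma unitE x : (x \is a GRing.unit) = good 1 x.
Proof.
by rewrite -{1}[x]natr_Zp unitZpE ?m_gt1 // coprime_pexpl // prime_coprime // /good expn1.
Qed.

Lemma goodMu k u x : (k <= mu)%N -> u \is a GRing.unit -> good k (u * x) = good k x.
Proof.
move=> km; rewrite unitE /good valM dvd_modm ?dvdn_exp2l // => gu.
rewrite Gauss_dvdr //; apply: coprimeXl; rewrite prime_coprime //;
by move: gu; rewrite /good expn1.
Qed.

Lemma goodMp k x : (k <= mu)%N -> good k (p%:R * x) = good k.-1 x.
Proof.
move=> km; rewrite /good valM val_natr modnMml dvd_modm ?dvdn_exp2l //.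
case: k km => [|k] km /=; first by rewrite !expn0 !dvd1n.
by rewrite expnS dvdn_pmul2l ?prime_gt0.
Qed.

Lemma goodMp2 k x : (k <= mu)%N -> good k (p%:R * p%:R * x) = good k.-2 x.
Proof.
move=> km; rewrite -mulrA goodMp // goodMp //; exact: leq_trans (leq_pred k) km.
Qed.

Lemma good_mu x : good mu x = (x != 0).
Proof. by rewrite /good eq0_val. Qed.

Lemma nu_mulp x : nu (p%:R * x).
Proof. by rewrite nuE goodMp // good0. Qed.

Lemma mulp_half y : nu y -> y = p%:R * ((val y %/ p)%:R).
Proof. by move=> ny; rewrite -natrM mulnC divnK // natr_Zp. Qed.

Lemma card_ker_p : #|[set x : R | p%:R * x == 0]| = p.
Proof.
set d := (p ^ mu.-1)%N.
have md : m = (p * d)%N by rewrite /d -expnS prednK.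
have d0 : (0 < d)%N by rewrite expn_gt0 prime_gt0.
have -> : [set x : R | p%:R * x == 0] = (fun i : 'I_p => ((i * d)%:R : R)) @: setT.
  apply/setP => x; rewrite inE -[_ == 0]negbK -good_mu goodMp // negbK; apply/idP/imsetP.
    move=> dx; have lt : (val x %/ d < p)%N.
      by rewrite ltn_divLR // -md val_lt.
    by exists (Ordinal lt) => //=; rewrite divnK // natr_Zp.
  case=> i _ ->; rewrite /good val_natr modn_small ?dvdn_mull //.
  by rewrite md ltn_pmul2r.
have inj : injective (fun i : 'I_p => ((i * d)%:R : R)).
  move=> i j /(congr1 val); rewrite !val_natr !modn_small ?md ?ltn_pmul2r //.
  by move/eqP; rewrite eqn_pmul2r // => /eqP/val_inj.
by rewrite (card_imset _ inj) cardsT card_ord.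
Qed.

Lemma card_fiber_p y : nu y -> #|[set x : R | p%:R * x == y]| = p.
Proof.
move=> /mulp_half E; rewrite E (card_fiber (phi:=fun x : R => p%:R * x)); first exact: card_ker_p.
by move=> a b; rewrite mulrDr.
Qed.

Lemma sum_mulp (V : nmodType) (f : R -> V) :
  \sum_(x : R) f (p%:R * x) = (\sum_(y | nu y) f y) *+ p.
Proof. apply: sum_fiber => [x|y]; [exact: nu_mulp| exact: card_fiber_p]. Qed.


Definition nuv n (r : 'rV[R]_n) : bool := [forall j, nu (r 0 j)].

Lemma card_ker_vec n : #|[set r : 'rV[R]_n | p%:R *: r == 0]| = (p ^ n)%N.
Proof.
set K := [set x : R | p%:R * x == 0].
have inj : injective (fun f : {ffun 'I_n -> R} => \row_j f j).
  move=> f g E; apply/ffunP => j.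
  by have := congr1 (fun M : 'rV[R]_n => M 0 j) E; rewrite /= !mxE.
have -> : [set r : 'rV[R]_n | p%:R *: r == 0] =
    (fun f : {ffun 'I_n -> R} => \row_j f j) @: [set f | f \in ffun_on K].
  apply/setP => r; rewrite inE; apply/idP/imsetP.
    move=> /eqP E; exists [ffun j => r 0 j].
      rewrite inE; apply/ffun_onP => j; rewrite ffunE inE.
      by have := congr1 (fun M : 'rV[R]_n => M 0 j) E; rewrite /= !mxE => ->.
    by apply/rowP => j; rewrite !mxE ffunE.
  case=> f; rewrite inE => /ffun_onP fK ->; apply/eqP/rowP => j; rewrite !mxE.
  by move: (fK j); rewrite inE => /eqP.
by rewrite (card_imset _ inj) cardsE card_ffun_on card_ker_p card_ord.
Qed.

Lemma card_fiber_vec n (y : 'rV[R]_n) : nuv y -> #|[set r | p%:R *: r == y]| = (p ^ n)%N.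
Proof.
move=> /forallP ny.
have -> : y = p%:R *: \row_j ((val (y 0 j) %/ p)%:R : R).
  by apply/rowP => j; rewrite !mxE -mulp_half.
rewrite (card_fiber (phi := fun r : 'rV[R]_n => p%:R *: r)); first exact: card_ker_vec.
by move=> a b; rewrite scalerDr.
Qed.

Lemma nuv_mulp n (r : 'rV[R]_n) : nuv (p%:R *: r).
Proof. by apply/forallP => j; rewrite mxE nu_mulp. Qed.

Lemma sum_mulp_vec (V : nmodType) n (f : 'rV[R]_n -> V) :
  \sum_(r : 'rV[R]_n) f (p%:R *: r) = (\sum_(y | nuv y) f y) *+ (p ^ n).
Proof. apply: sum_fiber => [x|y]; [exact: nuv_mulp| exact: card_fiber_vec]. Qed.


Definition Kf k n (a : R) (r : 'rV[R]_n) : rat :=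
  \sum_(D : 'M[R]_n | D^T == D) (good k (\det (block_mx a%:M r r^T D)) : nat)%:R.
Arguments Kf : clear implicits.
Definition Nf k n : rat := \sum_(A : 'M[R]_n | A^T == A) (good k (\det A) : nat)%:R.
Definition Sf n : rat := \sum_(A : 'M[R]_n | A^T == A) 1.

Lemma N_split k n : Nf k n.+1 = \sum_(a : R) \sum_(r : 'rV[R]_n) Kf k n a r.
Proof.
rewrite /Nf (sum_sym_block (k:=1) (l:=n)) sum_M1.
by apply: eq_bigr => a _; apply: eq_bigr => r _.
Qed.

Lemma S_split n : Sf n.+1 = (m%:R * (m ^ n)%:R) * Sf n.
Proof.
rewrite /Sf (sum_sym_block (k:=1) (l:=n)) sum_M1.
rewrite sum_cst sum_cst card_R card_mx mul1n card_ord Zp_cast ?m_gt1 //.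
by rewrite -natrM mulr_natl mulnC mulrnA.
Qed.

Lemma sym_transl_inv k l (X : 'M[R]_k) (Y : 'M[R]_(k, l)) : X^T = X ->
  (- (Y^T *m invmx X *m Y))^T = - (Y^T *m invmx X *m Y).
Proof.
by move=> sX; rewrite linearN /= !trmx_mul trmxK trmx_inv sX mulmxA.
Qed.

Lemma sum_schur k k' l (X : 'M[R]_l) (Y : 'M[R]_(l, k')) : (k <= mu)%N ->
  X^T = X -> X \in unitmx ->
  \sum_(D : 'M[R]_k' | D^T == D) (good k (\det (block_mx X Y Y^T D)) : nat)%:R
  = Nf k k'.
Proof.
move=> km sX uX.
under eq_bigr => D _ do rewrite det_schur // goodMu -?unitmxE //.
by rewrite /Nf (sum_transl_sym (fun D => (good k (\det D) : nat)%:R) (sym_transl_inv Y sX)).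
Qed.

Lemma K_unit k n a r : (k <= mu)%N -> a \is a GRing.unit -> Kf k n a r = Nf k n.
Proof.
move=> km ua; apply: sum_schur => //; first by rewrite tr_scalar_mx.
by rewrite unitmxE det_scalar1.
Qed.


Lemma K_perm k n a r (P : 'M[R]_n) : (k <= mu)%N -> P \in unitmx ->
  Kf k n a (r *m P) = Kf k n a r.
Proof.
move=> km uP; rewrite /Kf -(sum_congr_sym _ uP); apply: eq_bigr => D _.
set Q : 'M[R]_(1 + n) := block_mx 1%:M 0 0 P.
have -> : block_mx a%:M (r *m P) (r *m P)^T (P^T *m D *m P) =
    Q^T *m block_mx a%:M r r^T D *m Q.
  rewrite /Q tr_block_mx tr_scalar_mx !trmx0 !mulmx_block.
  rewrite !mul0mx !mulmx0 !addr0 !add0r !mul_scalar_mx !scale1r !mulmx1 trmx_mul.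
  by [].
rewrite !det_mulmx det_tr /Q det_ublock det1 mul1r mulrC mulrA goodMu //.
by rewrite unitrM -unitmxE uP.
Qed.

Lemma p_dvd_m : (p %| m)%N.
Proof. by rewrite dvdn_exp. Qed.

Lemma nu_det2 (a c d : R) : nu a -> ~~ nu c -> ~~ nu (a * d - c * c).
Proof.
rewrite /nu => na nc; apply/negP => nu_u.
have : (p %| val ((a * d - c * c + c * c)%R))%N.
  by rewrite subrK valM dvd_modm ?p_dvd_m // dvdn_mulr.
rewrite valD dvd_modm ?p_dvd_m // dvdn_addr // valM dvd_modm ?p_dvd_m //.
by rewrite Euclid_dvdM // orbb (negbTE nc).
Qed.


Lemma K_case2 k n a (r : 'rV[R]_n.+1) : (k <= mu)%N -> nu a -> ~~ nu (r 0 0) ->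
  Kf k n.+1 a r = (m%:R * (m ^ n)%:R) * Nf k n.
Proof.
move=> km na nc; rewrite /Kf.
rewrite (sum_sym_block (k:=1) (l:=n)) sum_M1.
set c := r 0 0.
set r2 := rsubmx (r : 'M_(1, 1 + n)).
have Er : r = row_mx c%:M r2.
  rewrite -[r in LHS](hsubmxK (r : 'M_(1, 1 + n))); f_equal.
  rewrite [LHS]mx11_scalar mxE; congr (_%:M); congr (r _ _); exact: val_inj.
transitivity (\sum_(d : R) \sum_(e : 'rV[R]_n) Nf k n); last first.
  rewrite sum_cst sum_cst card_R card_mx mul1n card_ord Zp_cast ?m_gt1 //.
  by rewrite -natrM mulr_natl mulnC mulrnA.
apply: eq_bigr => d _; apply: eq_bigr => e _.
pose X := block_mx (a%:M : 'M[R]_1) (c%:M : 'M[R]_1) (c%:M : 'M[R]_1) (d%:M : 'M[R]_1).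
have sX : X^T = X by rewrite /X tr_block_mx !tr_scalar_mx.
have uX : X \in unitmx.
  rewrite unitmxE (det2 X).
  have [-> -> -> ->] := blk11 a c c d.
  by rewrite unitE -[good 1 _]negbK -nuE nu_det2.
rewrite -(sum_schur (col_mx r2 e) km sX uX); apply: eq_bigr => D _.
congr ((good k _ : nat)%:R).
rewrite Er (tr_row_mx (c%:M : 'M[R]_1) r2) tr_scalar_mx.
rewrite (@block_mxA R 1 1 n 1 1 n (a%:M : 'M[R]_1) (c%:M : 'M[R]_1) r2 (c%:M : 'M[R]_1) (d%:M : 'M[R]_1) e r2^T e^T D).
by rewrite det_cast tr_col_mx.
Qed.


Lemma trZ n1 n2 (c : R) (A : 'M[R]_(n1, n2)) : (c *: A)^T = c *: A^T.
Proof. by apply/matrixP => i j; rewrite !mxE. Qed.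

Lemma K3a k n a (r : 'rV[R]_n) : (k <= mu)%N -> a \is a GRing.unit ->
  Kf k n (p%:R * a) (p%:R *: r) = Nf k.-1 n.
Proof.
move=> km ua; rewrite /Kf.
have uA : (a%:M : 'M[R]_1) \in unitmx by rewrite unitmxE det_scalar1.
set C := r^T *m invmx (a%:M : 'M[R]_1) *m r.
have sC : (- (p%:R *: C))^T = - (p%:R *: C).
  by rewrite linearN /= trZ /C !trmx_mul trmxK trmx_inv tr_scalar_mx mulmxA.
rewrite /Nf -(sum_transl_sym (fun D => (good k.-1 (\det D) : nat)%:R) sC).
apply: eq_bigr => D _; congr ((_ : nat)%:R).
have -> : block_mx (p%:R * a)%:M (p%:R *: r) (p%:R *: r)^T D =
    block_mx (p%:R%:M : 'M[R]_1) 0 0 1%:M *m block_mx a%:M r (p%:R *: r^T) D.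
  rewrite mulmx_block !mul_scalar_mx !mul0mx !addr0 !add0r scale1r scale1r.
  by rewrite scale_scalar_mx trZ.
rewrite det_mulmx det_ublock det_scalar1 det1 mulr1 goodMp // det_schur //.
rewrite det_scalar1 goodMu //; last exact: leq_trans (leq_pred k) km.
by rewrite /C -!scalemxAl.
Qed.

Lemma K3b k n b (r : 'rV[R]_n) : (k <= mu)%N ->
  Kf k n (p%:R * (p%:R * b)) (p%:R *: r) = Kf k.-2 n b r.
Proof.
move=> km; rewrite /Kf; apply: eq_bigr => D _; congr ((_ : nat)%:R).
set E : 'M[R]_(1 + n) := block_mx (p%:R%:M : 'M[R]_1) 0 0 1%:M.
have -> : block_mx (p%:R * (p%:R * b))%:M (p%:R *: r) (p%:R *: r)^T D =
    E *m block_mx b%:M r r^T D *m E.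
  rewrite /E !mulmx_block !mul_scalar_mx !mul_mx_scalar !mul0mx !mulmx0.
  rewrite !addr0 !add0r !scale1r !scale_scalar_mx trZ mulrC.
  by rewrite scaler0 add0r.
rewrite !det_mulmx /E det_ublock det_scalar1 det1 mulr1 mulrAC goodMp2 //.
Qed.


Definition Ucnt : rat := \sum_(a : R | ~~ nu a) 1.
Definition Ncnt : rat := \sum_(a : R | nu a) 1.
Definition Vcnt n : rat := \sum_(r : 'rV[R]_n | nuv r) 1.

Lemma Ncnt_eq : Ncnt * p%:R = m%:R.
Proof.
move: (sum_mulp (fun _ => (1 : rat))); rewrite sum_cst card_R => E.
by rewrite /Ncnt mulr_natr -E.
Qed.

Lemma Ucnt_eq : Ucnt + Ncnt = m%:R.
Proof.
have E : \sum_(a : R) (1 : rat) = m%:R by rewrite sum_cst card_R.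
by rewrite -E (bigID nu) /= addrC.
Qed.

Lemma Vcnt_eq n : Vcnt n * (p ^ n)%:R = (m ^ n)%:R.
Proof.
move: (sum_mulp_vec (n := n) (fun _ => (1 : rat))).
rewrite sum_cst card_mx card_R mul1n => E.
by rewrite /Vcnt mulr_natr -E.
Qed.

Lemma unit_nu x : (x \is a GRing.unit) = ~~ nu x.
Proof. by rewrite unitE nuE negbK. Qed.

Lemma K_nuv k n a (r : 'rV[R]_n.+1) : (k <= mu)%N -> nu a -> ~~ nuv r ->
  Kf k n.+1 a r = (m%:R * (m ^ n)%:R) * Nf k n.
Proof.
move=> km na; rewrite negb_forall => /existsP [j nj].
have uP : (perm_mx (tperm 0 j) : 'M[R]_n.+1) \in unitmx.
  by rewrite unitmxE det_perm unitrX ?unitrN1.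
rewrite -(K_perm a r km uP) K_case2 //.
have -> : r *m perm_mx (tperm 0 j) = col_perm (tperm 0 j) r.
  by rewrite col_permE tpermV.
by rewrite mxE tpermL.
Qed.

Lemma C2_eq k n : (k <= mu)%N ->
  \sum_(a : R | nu a) \sum_(r : 'rV[R]_n.+1 | ~~ nuv r) Kf k n.+1 a r =
  Ncnt * ((m ^ n.+1)%:R - Vcnt n.+1) * ((m%:R * (m ^ n)%:R) * Nf k n).
Proof.
move=> km.
have -> : (m ^ n.+1)%:R - Vcnt n.+1 = \sum_(r : 'rV[R]_n.+1 | ~~ nuv r) 1.
  have E : \sum_(r : 'rV[R]_n.+1) (1 : rat) = (m ^ n.+1)%:R.
    by rewrite sum_cst card_mx mul1n card_ord Zp_cast ?m_gt1.
  by apply/eqP; rewrite subr_eq /Vcnt -E (bigID (@nuv n.+1)) /= addrC.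
rewrite /Ncnt -mulrA big_distrl /=; apply: eq_bigr => a na.
rewrite mul1r big_distrl /=; apply: eq_bigr => r nr.
by rewrite mul1r K_nuv.
Qed.

Lemma C3_eq k n : (k <= mu)%N ->
  (\sum_(a : R | nu a) \sum_(r : 'rV[R]_n | nuv r) Kf k n a r) *+ (p ^ n) *+ p *+ p
  = ((m ^ n)%:R * Ucnt * Nf k.-1 n) *+ p + Nf k.-2 n.+1.
Proof.
move=> km.
rewrite -sumrMnl.
under eq_bigr => a _ do rewrite -(sum_mulp_vec (fun r => Kf k n a r)).
rewrite exchange_big /= -sumrMnl.
under eq_bigr => r _ do rewrite -(sum_mulp (fun a => Kf k n a (p%:R *: r))).
rewrite -sumrMnl.
under eq_bigr => r _ do rewrite (bigID nu) /= mulrnDl.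
rewrite big_split /= addrC; congr (_ + _); last first.
  rewrite N_split exchange_big /=; apply: eq_bigr => r _.
  rewrite -(sum_mulp (fun a => Kf k n (p%:R * a) (p%:R *: r))).
  by apply: eq_bigr => b _; rewrite K3b.
rewrite sumrMnl; congr (_ *+ _).
under eq_bigr => r _ do under eq_bigr => a ua do
  rewrite K3a ?unit_nu //.
have E : \sum_(a : R | ~~ nu a) Nf k.-1 n = Ucnt * Nf k.-1 n.
  by rewrite /Ucnt big_distrl /=; apply: eq_bigr => a _; rewrite mul1r.
under eq_bigr do rewrite E.
by rewrite sum_cst card_mx card_R mul1n -mulrA mulr_natl.
Qed.



Lemma N_rec k n : (k <= mu)%N ->
  Nf k n.+1 = Ucnt * (m ^ n)%:R * Nf k n
   + \sum_(a : R | nu a) \sum_(r : 'rV[R]_n | ~~ nuv r) Kf k n a r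
   + \sum_(a : R | nu a) \sum_(r : 'rV[R]_n | nuv r) Kf k n a r.
Proof.
move=> km; rewrite N_split (bigID nu) /= addrC -addrA; congr (_ + _); last first.
  rewrite -big_split /=; apply: eq_bigr => a _.
  by rewrite (bigID (@nuv n)) /= addrC.
under eq_bigr => a na do under eq_bigr => r _ do rewrite K_unit ?unit_nu //.
rewrite /Ucnt big_distrl big_distrl /=; apply: eq_bigr => a _.
by rewrite sum_cst card_mx card_R mul1n mul1r mulr_natl.
Qed.

Lemma Sf_neq0 n : Sf n != 0.
Proof.
rewrite /Sf sum_cst_pred -mulr_natl mulr1 pnatr_eq0 -lt0n card_gt0.
by apply/set0Pn; exists 0; rewrite inE trmx0.
Qed.

Definition Fr k n : rat := Nf k n / Sf n.

Lemma C3_div k n : (k <= mu)%N ->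
  \sum_(a : R | nu a) \sum_(r : 'rV[R]_n | nuv r) Kf k n a r
  = (((m ^ n)%:R * Ucnt * Nf k.-1 n) * p%:R + Nf k.-2 n.+1)
                  / ((p ^ n)%:R * p%:R * p%:R).
Proof.
move=> km.
have P0 : (p%:R : rat) != 0 by rewrite pnatr_eq0 -lt0n prime_gt0.
have D0 : ((p ^ n)%:R * p%:R * p%:R : rat) != 0.
  by rewrite !mulf_neq0 // pnatr_eq0 -lt0n expn_gt0 prime_gt0.
apply: (mulIf D0); rewrite divfK //.
by rewrite [in RHS]mulr_natr -(C3_eq n km) !mulrA !mulr_natr.
Qed.

Lemma F_rec k n : (k <= mu)%N ->
  let q : rat := (p%:R)^-1 in
  Fr k n.+1 = (1 - q) * Fr k n
    + (if n is n'.+1 then q * (1 - q ^+ n) * Fr k n' else 0)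
    + q ^+ n.+1 * (1 - q) * Fr k.-1 n + q ^+ n.+2 * Fr k.-2 n.+1.
Proof.
move=> km q.
have P0 : (p%:R : rat) != 0 by rewrite pnatr_eq0 -lt0n prime_gt0.
have M0 : (m%:R : rat) != 0 by rewrite pnatr_eq0 -lt0n expn_gt0 prime_gt0.
have eN : Ncnt = m%:R / p%:R by rewrite -Ncnt_eq mulfK.
have eU : Ucnt = m%:R - m%:R / p%:R by rewrite -eN -Ucnt_eq addrK.
rewrite /Fr N_rec // C3_div // eU S_split.
have S0 := Sf_neq0.
case: n => [|n].
  rewrite big1 => [|a _]; last first.
    by rewrite big_pred0 // => r; apply/negbTE/negPn/forallP => -[].
  rewrite /q !natrX addr0.
  move: (Nf k 0) (Nf k.-1 0) (Nf k.-2 1) (Sf 0) (S0 0) => A B C S S0'.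
  move: (m%:R : rat) (p%:R : rat) M0 P0 => M P M0' P0'.
  by field; rewrite S0' expf_neq0.
rewrite C2_eq // S_split.
have eV := Vcnt_eq n.+1.
have eV' : Vcnt n.+1 = (m ^ n.+1)%:R / (p ^ n.+1)%:R.
  by rewrite -eV mulfK // pnatr_eq0 -lt0n expn_gt0 prime_gt0.
rewrite eV' eN /q !natrX.
move: (Nf k n.+1) (Nf k n) (Nf k.-1 n.+1) (Nf k.-2 n.+2) (Sf n) (S0 n) => A A' B C S S0'.
move: (p%:R : rat) P0 => P P0'.
rewrite !exprVn !exprS.
have M0' : P ^+ mu != 0 by rewrite expf_neq0.
move: (P ^+ mu) M0' => M M0'.
have X0 : M ^+ n != 0 by rewrite expf_neq0.
have Y0 : P ^+ n != 0 by rewrite expf_neq0.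
move: (M ^+ n) (P ^+ n) X0 Y0 => X Y X0 Y0.
by field; rewrite S0' X0 Y0 M0' P0'.
Qed.


Lemma F0 n : Fr 0 n = 0.
Proof.
rewrite /Fr /Nf big1 ?mul0r // => A _; by rewrite good0.
Qed.

Lemma Fn0 k : (0 < k)%N -> Fr k 0 = 1.
Proof.
move=> k0; rewrite /Fr /Nf /Sf.
rewrite (eq_bigr (fun _ => 1)) ?divff ?Sf_neq0 // => A _.
by rewrite det_mx00 good_1.
Qed.

End ZP.

Definition G p k n : rat := if k is 0 then 0 else Fr p k k n.

Lemma F_indep p (pp : prime p) k : forall n mu, (0 < mu)%N -> (k <= mu)%N ->
  Fr p mu k n = G p k n.
Proof.
elim/ltn_ind: k => k IHk n.
elim/ltn_ind: n => n IHn mu mu0 km.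
case: k IHk IHn km => [|k] IHk IHn km; first by rewrite /G F0.
rewrite /G.
case: n IHn => [|n] IHn; first by rewrite !Fn0.
have kk : (k.+1 <= k.+1)%N by [].
have k0 : (0 < k.+1)%N by [].
rewrite (F_rec pp mu0 n km) (F_rec pp k0 n kk) /=.
have Ek : forall j n', (j < k.+1)%N -> Fr p mu j n' = Fr p k.+1 j n'.
  move=> j n' jk; rewrite (IHk j jk n' mu mu0) ?(IHk j jk n' k.+1) //.
    exact: ltnW.
  exact: leq_trans (ltnW jk) km.
rewrite (IHn n (ltnSn n) mu mu0 km) (Ek k n) // (Ek k.-1 n.+1) ?(leq_ltn_trans (leq_pred k)) //.
case: n IHn => [|n] IHn //.
by rewrite (IHn n (leqW (ltnSn n)) mu mu0 km).
Qed.

Lemma sum_bool (T : finType) (P b : pred T) :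
  \sum_(i | P i) ((b i : nat)%:R : rat) = #|[set i | P i && b i]|%:R.
Proof.
rewrite -[RHS]mulr1 mulr_natl -sum_cst_pred big_mkcondr /=.
by apply: eq_bigr => i _; case: (b i).
Qed.

Lemma symP_Fr p k n : prime p -> (0 < k)%N -> symP (p ^ k) n = Fr p k k n.
Proof.
move=> pp k0; rewrite /symP /Fr /Nf /Sf sum_bool sum_cst_pred.
by congr (_%:R / _); apply: eq_card => A; rewrite !inE good_mu.
Qed.

Lemma Pdet_G p n (k : nat) : prime p -> Pdet p n k = G p k n.
Proof. by case: k => [|k] //= pp; rewrite symP_Fr. Qed.

Unset Implicit Arguments.

Theorem theorem3p1 (p n : nat) (mu : int) :
  prime p -> (0 < n)%N -> 0 < mu ->
  let q : rat := (p%:R)^-1 in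
  Pdet p n mu =
    (1 - q) * Pdet p n.-1 mu
    + (if (2 <= n)%N then q * (1 - q ^+ n.-1) * Pdet p (n - 2) mu else 0)
    + q ^+ n * (1 - q) * Pdet p n.-1 (mu - 1)
    + q ^+ n.+1 * Pdet p n (mu - 2).
Proof.
move=> pp n0 mu0 q.
case: mu mu0 => [k|k] // k0; rewrite ltz_nat in k0.
case: n n0 => [|n] // _.
have E1 : Pdet p n (k%:Z - 1) = G p k.-1 n.
  case: k k0 => [|k] // _.
  have -> : (k.+1%:Z - 1 = k%:Z) by lia.
  by rewrite Pdet_G.
have E2 : Pdet p n.+1 (k%:Z - 2) = G p k.-2 n.+1.
  move: E1; case: k k0 => [|[|k]] // _ _; last first.
    have -> : (k.+2%:Z - 2 = k%:Z) by lia.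
    by rewrite Pdet_G.
rewrite E1 E2 !Pdet_G //.
have G_F : forall j n', (j <= k)%N -> G p j n' = Fr p k j n'.
  by move=> j n' jk; rewrite (F_indep pp n' k0 jk).
rewrite !G_F ?leq_pred ?(leq_trans (leq_pred _) (leq_pred _)) //.
rewrite (F_rec pp k0 n (leqnn k)) -/q /=.
by case: n {E1 E2} => [|n] //; rewrite !subSS subn0.
Qed.
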